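(* Let $n\ge 2$ and let $\alpha,\beta,x$ be independent random variables, each uniformly distributed on $\{0,\dots,2^n-1\}$. Let $c_i$ be the carry bit entering position $i$ of $\alpha+x$ (so $c_0=0$, $c_{i+1}=\mathrm{maj}(x_i,\alpha_i,c_i)$), and let $\tilde y=((\alpha\dotplus x)\oplus(\beta\dotplus x))\oplus\alpha\oplus\beta=\sum_{i=0}^{n-1}\tilde y_i2^i$. Then for every $i=0,\dots,n-1$, $$\Pr(c_i=1)=\frac{2^i-1}{2^{i+1}},\qquad \Pr(\tilde y_i=0)=\frac23+\frac{1}{3\cdot 4^i}.$$
   Context: $a\dotplus b=(a+b)\bmod 2^n$; $\oplus$ is bitwise XOR; $\mathrm{maj}(p,q,r)=(pq)\oplus(pr)\oplus(qr)$; $x_i,\alpha_i$ denote the $i$-th binary digits (bit $0$ least significant). *)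

(* Defs.v *)
From Stdlib Require Import PeanoNat.
From HB Require Import structures.
From mathcomp Require Import all_boot all_order all_algebra.
Set Implicit Arguments. Unset Strict Implicit. Unset Printing Implicit Defensive.
Import Order.TTheory GRing.Theory Num.Theory.

Definition bitn (i x : nat) : bool := Nat.testbit x i.

Definition xorn (a b : nat) : nat := Nat.lxor a b.

Definition addm (n a b : nat) : nat := (a + b) %% 2 ^ n.

Definition maj (p q r : bool) : bool := [&& p & q] (+) [&& p & r] (+) [&& q & r].

Fixpoint carry (alpha x : nat) (i : nat) : bool :=
  match i with
  | 0 => false
  | j.+1 => maj (bitn j x) (bitn j alpha) (carry alpha x j)
  end.

Definition ytilde (n alpha beta x : nat) : nat :=
  xorn (xorn (xorn (addm n alpha x) (addm n beta x)) alpha) beta.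

Definition prob3 (n : nat) (E : 'I_(2 ^ n) -> 'I_(2 ^ n) -> 'I_(2 ^ n) -> bool) : rat :=
  (#|[set t : 'I_(2 ^ n) * 'I_(2 ^ n) * 'I_(2 ^ n) | E t.1.1 t.1.2 t.2]|)%:R
  / ((2 ^ n) ^ 3)%:R.

Arguments prob3 : clear implicits.

(* Main.v *)
From Stdlib Require Import PeanoNat.
Require Import Defs.
From HB Require Import structures.
From mathcomp Require Import all_boot all_order all_algebra zify ring.
Import Order.TTheory GRing.Theory Num.Theory.

Lemma Nat_evenodd a : Nat.even a = ~~ odd a /\ Nat.odd a = odd a.
Proof.
elim: a => [|a [IHe IHo]]; first by [].
rewrite Nat.even_succ Nat.odd_succ IHe IHo /=; split=> //; by rewrite negbK.
Qed.

Lemma div2E a : Nat.div2 a = a./2 /\ Nat.div2 a.+1 = a.+1./2.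
Proof.
elim: a => [|a [IH1 IH2]]; first by [].
split=> //. by rewrite /= IH1.
Qed.

Lemma bitnE j a : bitn j a = odd (a %/ 2 ^ j).
Proof.
elim: j a => [|j IH] a.
  by rewrite /bitn /= expn0 divn1 (proj2 (Nat_evenodd a)).
rewrite /bitn /=. rewrite -/(bitn j (Nat.div2 a)) IH (proj1 (div2E a)) -divn2.
by rewrite -divnMA expnS.
Qed.

Lemma bit_shift_low m j a (u : bool) : a < 2 ^ m -> j < m ->
  bitn j (a + u * 2 ^ m) = bitn j a.
Proof.
move=> ha hj; rewrite !bitnE.
have -> : 2 ^ m = 2 ^ (m - j) * 2 ^ j by rewrite -expnD subnK // ltnW.
rewrite addnC mulnA divnMDl ?expn_gt0 // oddD oddM oddX.
have -> : (m - j == 0) = false by apply/eqP; lia.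
by rewrite /= andbF.
Qed.

Lemma bit_shift_top m a (u : bool) : a < 2 ^ m -> bitn m (a + u * 2 ^ m) = u.
Proof.
move=> ha; rewrite bitnE addnC divnMDl ?expn_gt0 // divn_small //.
by case: u.
Qed.

Lemma carry_shift M i a x (ua ux : bool) : a < 2 ^ M -> x < 2 ^ M -> i <= M ->
  carry (a + ua * 2 ^ M) (x + ux * 2 ^ M) i = carry a x i.
Proof.
move=> ha hx; elim: i => [|i IH] hi //=.
by rewrite !bit_shift_low // IH // ltnW.
Qed.

Lemma carry_shift_top m a x (ua ux : bool) : a < 2 ^ m -> x < 2 ^ m ->
  carry (a + ua * 2 ^ m) (x + ux * 2 ^ m) m.+1 = maj ux ua (carry a x m).
Proof.
move=> ha hx /=. by rewrite !bit_shift_top // carry_shift.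
Qed.

Lemma bit_mod i n y : i < n -> bitn i (y %% 2 ^ n) = bitn i y.
Proof.
move=> hi; rewrite !bitnE {2}(divn_eq y (2 ^ n)).
have -> : 2 ^ n = 2 ^ (n - i) * 2 ^ i by rewrite -expnD subnK // ltnW.
rewrite mulnA divnMDl ?expn_gt0 // oddD oddM oddX.
have -> : (n - i == 0) = false by apply/eqP; lia.
by rewrite /= andbF.
Qed.

Lemma modB i a : a %% 2 ^ i.+1 = a %% 2 ^ i + bitn i a * 2 ^ i.
Proof.
rewrite bitnE.
set P := 2 ^ i. have hP : 0 < P by rewrite expn_gt0.
rewrite {1}(divn_eq a P) {1}(divn_eq (a %/ P) 2).
have -> : 2 ^ i.+1 = 2 * P by rewrite expnS.
have hr : a %% P < P by rewrite ltn_mod.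
rewrite modn2 mulnDl -mulnA -addnA modnMDl modn_small.
  by rewrite addnC; case: odd; rewrite ?mul1n ?mul0n.
by case: odd; lia.
Qed.

Lemma mod_cut L c d : c * d <= L -> L - c * d < d -> L %% d = L - c * d.
Proof.
move=> h1 h2; rewrite -{1}(subnK h1) addnC modnMDl modn_small //.
Qed.

Lemma carry_add i a x :
  a %% 2 ^ i + x %% 2 ^ i = (a + x) %% 2 ^ i + carry a x i * 2 ^ i.
Proof.
elim: i => [|i IH].
  by rewrite expn0 !modn1.
have hP : 0 < 2 ^ i by rewrite expn_gt0.
have e2 : 2 ^ i.+1 = 2 * 2 ^ i by rewrite expnS.
have hm : (a %% 2 ^ i.+1 + x %% 2 ^ i.+1) %% 2 ^ i.+1 = (a + x) %% 2 ^ i.+1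
  by rewrite modnDm.
rewrite -hm.
have hr : (a + x) %% 2 ^ i < 2 ^ i by rewrite ltn_mod.
have ha : a %% 2 ^ i < 2 ^ i by rewrite ltn_mod.
have hx : x %% 2 ^ i < 2 ^ i by rewrite ltn_mod.
rewrite (@mod_cut (a %% 2 ^ i.+1 + x %% 2 ^ i.+1) (carry a x i.+1)); last first.
- rewrite !modB e2 /= /maj. move: IH hr hP ha hx.
  clear hm; generalize (a %% 2 ^ i) => ra; generalize (x %% 2 ^ i) => rx;
  generalize ((a + x) %% 2 ^ i) => r; generalize (2 ^ i) => P.
  case: (bitn i a); case: (bitn i x); case: (carry a x i) => /= *; lia.
- rewrite !modB e2 /= /maj. move: IH hr hP ha hx.
  clear hm; generalize (a %% 2 ^ i) => ra; generalize (x %% 2 ^ i) => rx;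
  generalize ((a + x) %% 2 ^ i) => r; generalize (2 ^ i) => P.
  case: (bitn i a); case: (bitn i x); case: (carry a x i) => /= *; lia.
- rewrite subnK //.
  rewrite !modB e2 /= /maj. move: IH hr hP ha hx.
  clear hm; generalize (a %% 2 ^ i) => ra; generalize (x %% 2 ^ i) => rx;
  generalize ((a + x) %% 2 ^ i) => r; generalize (2 ^ i) => P.
  case: (bitn i a); case: (bitn i x); case: (carry a x i) => /= *; lia.
Qed.

Lemma add_bit i a x : bitn i (a + x) = bitn i a (+) bitn i x (+) carry a x i.
Proof.
have h1 := carry_add i a x.
have h2 := carry_add i.+1 a x.
rewrite !modB expnS /= /maj in h2.
have hP : 0 < 2 ^ i by rewrite expn_gt0.
move: h1 h2 hP; generalize (a %% 2 ^ i) => ra; generalize (x %% 2 ^ i) => rx;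
  generalize ((a + x) %% 2 ^ i) => r; generalize (2 ^ i) => P.
case: (bitn i a); case: (bitn i x); case: (carry a x i); case: (bitn i (a + x)) => /= *; lia.
Qed.

Lemma ytilde_bit n i a b x : i < n ->
  ~~ bitn i (ytilde n a b x) = (carry a x i == carry b x i).
Proof.
move=> hi; rewrite /ytilde /xorn /bitn !Nat.lxor_spec -!/(bitn _ _) /addm.
rewrite !bit_mod // !add_bit.
by case: (bitn i a); case: (bitn i b); case: (bitn i x); case: (carry a x i); case: (carry b x i).
Qed.

Definition S3 m (G : nat -> nat -> nat -> nat) :=
  \sum_(0 <= a < 2 ^ m) \sum_(0 <= b < 2 ^ m) \sum_(0 <= x < 2 ^ m) G a b x.

Lemma split1 m (F : nat -> nat) :
  \sum_(0 <= a < 2 ^ m.+1) F a = \sum_(u : bool) \sum_(0 <= a < 2 ^ m) F (a + u * 2 ^ m).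
Proof.
rewrite big_bool /= expnS mul2n -addnn (@big_cat_nat _ _ _ (2 ^ m)) /= ?leq_addr //.
rewrite addnC; congr (_ + _).
  rewrite -{1}[2 ^ m]add0n big_addn addnK.
  by apply: eq_bigr => i _; rewrite mul1n.
by apply: eq_bigr => i _; rewrite mul0n addn0.
Qed.

Lemma sum_bool_swap (r : seq nat) (H : bool -> nat -> nat) :
  \sum_(a <- r) \sum_(u : bool) H u a = \sum_(u : bool) \sum_(a <- r) H u a.
Proof. by rewrite exchange_big. Qed.

Lemma S3_bool m (H : bool -> nat -> nat -> nat -> nat) :
  S3 m (fun a b x => \sum_(u : bool) H u a b x) = \sum_(u : bool) S3 m (H u).
Proof.
rewrite /S3.
under eq_bigr => a _ do under eq_bigr => b _ do rewrite sum_bool_swap.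
under eq_bigr => a _ do rewrite sum_bool_swap.
by rewrite sum_bool_swap.
Qed.

Lemma S3_ext m G1 G2 :
  (forall a b x, a < 2 ^ m -> b < 2 ^ m -> x < 2 ^ m -> G1 a b x = G2 a b x) ->
  S3 m G1 = S3 m G2.
Proof.
move=> h; apply: eq_big_nat => a /= ha; apply: eq_big_nat => b /= hb;
  apply: eq_big_nat => x /= hx; exact: h.
Qed.

Lemma split3 m G :
  S3 m.+1 G = \sum_(ua : bool) \sum_(ub : bool) \sum_(ux : bool)
     S3 m (fun a b x => G (a + ua * 2 ^ m) (b + ub * 2 ^ m) (x + ux * 2 ^ m)).
Proof.
rewrite /S3.
under eq_bigr => a _ do under eq_bigr => b _ do rewrite split1.
under eq_bigr => a _ do rewrite split1.
rewrite split1.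
under eq_bigr => ua _ do under eq_bigr => a _ do under eq_bigr => ub _ do rewrite sum_bool_swap.
under eq_bigr => ua _ do rewrite sum_bool_swap.
under eq_bigr => ua _ do under eq_bigr => ub _ do rewrite sum_bool_swap.
by [].
Qed.

Definition W m (g : bool -> bool -> nat) :=
  S3 m (fun a b x => g (carry a x m) (carry b x m)).

Lemma W_ext m g h : (forall p q, g p q = h p q) -> W m g = W m h.
Proof. move=> e; apply: S3_ext => a b x _ _ _; exact: e. Qed.

Lemma W_S m g : W m.+1 g = W m (fun p q => \sum_(ua : bool) \sum_(ub : bool)
   \sum_(ux : bool) g (maj ux ua p) (maj ux ub q)).
Proof.
rewrite /W split3 [RHS]S3_bool; apply: eq_bigr => ua _.
rewrite [RHS]S3_bool; apply: eq_bigr => ub _.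
rewrite [RHS]S3_bool; apply: eq_bigr => ux _.
apply: S3_ext => a b x ha hb hx.
by rewrite !carry_shift_top.
Qed.

Lemma W0 g : W 0 g = g false false.
Proof. by rewrite /W /S3 expn0 !big_nat1. Qed.

Lemma liftS3 i k g : S3 (i + k) (fun a b x => g (carry a x i) (carry b x i)) = 8 ^ k * W i g.
Proof.
elim: k => [|k IH]; first by rewrite addn0 mul1n.
rewrite addnS split3.
have e : forall ua ub ux : bool,
  S3 (i + k) (fun a b x => g (carry (a + ua * 2 ^ (i + k)) (x + ux * 2 ^ (i + k)) i)
       (carry (b + ub * 2 ^ (i + k)) (x + ux * 2 ^ (i + k)) i)) = 8 ^ k * W i g.
  move=> ua ub ux; rewrite -IH; apply: S3_ext => a b x ha hb hx.
  by rewrite !carry_shift // leq_addr.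
under eq_bigr => ua _ do under eq_bigr => ub _ do under eq_bigr => ux _ do rewrite e.
rewrite !big_bool /= expnS; lia.
Qed.

Lemma e3 t : t ^ 3 = t * t * t.
Proof. by rewrite !expnS expn0 muln1 mulnA. Qed.
Lemma e2 t : t ^ 2 = t * t.
Proof. by rewrite !expnS expn0 muln1. Qed.

Definition gE (al be : nat) (p q : bool) : nat := if p == q then al else be.
Definition gC (al be : nat) (p q : bool) : nat := al * p + be.

Lemma W_E m al be :
  3 * W m (gE al be) + be * 2 ^ m = al * (2 * (2 ^ m) ^ 3 + 2 ^ m) + be * (2 ^ m) ^ 3.
Proof.
elim: m al be => [|m IH] al be.
  by rewrite W0 /gE /= expn0; lia.
rewrite W_S (@W_ext _ _ (gE (6 * al + 2 * be) (4 * al + 4 * be))); last first.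
  move=> p q; rewrite !big_bool /gE; case: p; case: q => /=; lia.
have := IH (6 * al + 2 * be) (4 * al + 4 * be).
rewrite !(expnS 2 m); generalize (W m (gE (6 * al + 2 * be) (4 * al + 4 * be))) (2 ^ m) => w s.
rewrite !e3 ?e2; nia.
Qed.

Lemma W_C m al be :
  2 * W m (gC al be) + al * (2 ^ m) ^ 2 = al * (2 ^ m) ^ 3 + 2 * be * (2 ^ m) ^ 3.
Proof.
elim: m al be => [|m IH] al be.
  by rewrite W0 /gC /= expn0; lia.
rewrite W_S (@W_ext _ _ (gC (4 * al) (2 * al + 8 * be))); last first.
  move=> p q; rewrite !big_bool /gC; case: p; case: q => /=; lia.
have := IH (4 * al) (2 * al + 8 * be).
rewrite !(expnS 2 m); generalize (W m (gC (4 * al) (2 * al + 8 * be))) (2 ^ m) => w s.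
rewrite !e3 ?e2; nia.
Qed.

Lemma card3 n (G : nat -> nat -> nat -> bool) :
  #|[set t : 'I_(2 ^ n) * 'I_(2 ^ n) * 'I_(2 ^ n) | G t.1.1 t.1.2 t.2]| = S3 n G.
Proof.
rewrite -sum1_card big_mkcond /=.
transitivity (\sum_(a < 2 ^ n) \sum_(b < 2 ^ n) \sum_(x < 2 ^ n) (G a b x : nat)).
  rewrite pair_bigA /= pair_bigA /=; apply: eq_bigr => [[[a b] x]] _.
  by rewrite inE /=; case: G.
rewrite /S3 big_mkord; apply: eq_bigr => a _.
rewrite big_mkord; apply: eq_bigr => b _.
by rewrite big_mkord.
Qed.

Local Open Scope ring_scope.
Lemma rat_frac (x y z w : nat) : (0 < y)%N -> (0 < w)%N -> (x * w = z * y)%N ->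
  (x%:R / y%:R : rat) = z%:R / w%:R.
Proof.
move=> hy hw e; apply/eqP; rewrite GRing.eqr_div ?pnatr_eq0 -?lt0n //.
by rewrite -!natrM e.
Qed.


Theorem mainTheorem6 (n : nat) (hn : (2 <= n)%N) (i : nat) (hi : (i < n)%N) :
  prob3 n (fun alpha beta x => carry alpha x i) = (2 ^ i - 1)%N%:R / (2 ^ i.+1)%N%:R
  /\
  prob3 n (fun alpha beta x => ~~ bitn i (ytilde n alpha beta x))
    = 2%:R / 3%:R + 1 / (3 * 4 ^ i)%N%:R.
Proof.
have en : n = (i + (n - i))%N by rewrite subnKC // ltnW.
have hs : (0 < 2 ^ i)%N by rewrite expn_gt0.
have ht : (0 < 2 ^ (n - i))%N by rewrite expn_gt0.
have e8 : (8 ^ (n - i) = (2 ^ (n - i)) ^ 3)%N by rewrite -expnM mulnC expnM.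
have e4 : (4 ^ i = (2 ^ i) ^ 2)%N by rewrite -expnM mulnC expnM.
have e2n : (2 ^ n = 2 ^ (n - i) * 2 ^ i)%N by rewrite -expnD addnC -en.
split.
- rewrite /prob3 (@card3 n (fun a b x => carry a x i)).
  have -> : S3 n (fun a b x => carry a x i) = (8 ^ (n - i) * W i (gC 1 0))%N.
    rewrite -liftS3 -en; apply: S3_ext => a b x _ _ _.
    by rewrite /gC mul1n addn0.
  apply: rat_frac; rewrite ?expn_gt0 //.
  have := W_C i 1%N 0%N; rewrite e8 e2n (expnS 2 i).
  generalize (W i (gC 1%N 0%N)) (2 ^ i)%N (2 ^ (n - i))%N hs => w s t hs'.
  rewrite !e3 ?e2 => h.
  have hw : (2 * w = s * s * (s - 1))%N by nia.
  transitivity (t * t * t * s * (2 * w))%N; first by ring.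
  rewrite hw; ring.
- rewrite /prob3 (@card3 n (fun a b x => ~~ bitn i (ytilde n a b x))).
  have -> : S3 n (fun a b x => ~~ bitn i (ytilde n a b x)) = (8 ^ (n - i) * W i (gE 1 0))%N.
    rewrite -liftS3 -en; apply: S3_ext => a b x _ _ _.
    by rewrite ytilde_bit // /gE; case: (_ == _).
  have -> : 2%:R / 3%:R + 1 / (3 * 4 ^ i)%N%:R = (2 * 4 ^ i + 1)%N%:R / (3 * 4 ^ i)%N%:R :> rat.
    rewrite !natrM natrD natrM. field.
    by rewrite pnatr_eq0 -lt0n expn_gt0.
  apply: rat_frac; rewrite ?expn_gt0 ?muln_gt0 ?expn_gt0 //.
  have := W_E i 1%N 0%N; rewrite e8 e2n e4.
  generalize (W i (gE 1%N 0%N)) (2 ^ i)%N (2 ^ (n - i))%N hs => w s t hs'.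
  rewrite !e3 ?e2 => h; nia.
Qed.
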